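(* Assume (FWW) for a flow $\Phi_t$ on $\mathbb{R}^n$ and a $k$-cone $C$. Let $K\subset\mathbb{R}^n$ be a compact invariant set and let $\mathbb{R}^n=E_y\oplus F_y$, $y\in K$, be a $k$-exponential separation of $(\Phi_t,D\Phi_t)$ along $K$ associated with $C$. For $y\in K$ let $P_y$ be the projection onto $E_y$ along $F_y$ and $Q_y=I-P_y$. Then: (i) the projections $P_y$ and $Q_y$ are bounded uniformly in $y\in K$; (ii) there exists a constant $C_1>0$ such that if $v\in\mathbb{R}^n\setminus\{0\}$ satisfies $\|P_y(v)\|\ge C_1\|Q_y(v)\|$ for some $y\in K$, then $v\in\operatorname{Int}C$; (iii) for any $v\in C\setminus\{0\}$ there exists a constant $\delta_3>0$ such that $\|Q_y(v)\|\le\delta_3\|P_y(v)\|$ for every $y\in K$.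
   Context: A closed set $C\subset\mathbb{R}^n$ is a $k$-cone if $lv\in C$ for all $v\in C$, $l\in\mathbb{R}$, and the maximal dimension of a linear subspace contained in $C$ is $k$. $C$ is $k$-solid if there is a $k$-dimensional subspace $W$ with $W\setminus\{0\}\subset\operatorname{Int}C$. Write $x\sim y$ if $x-y\in C$ and $x\approx y$ if $x-y\in\operatorname{Int}C$. A flow $\Phi_t$ is strongly monotone with respect to a $k$-solid cone $C$ if $x\sim y$ implies $\Phi_t(x)\sim\Phi_t(y)$ for $t\ge0$, and $x\ne y$, $x\sim y$ imply $\Phi_t(x)\approx\Phi_t(y)$ for $t>0$. Assumption (FWW): the flow $\Phi_t$ on $\mathbb{R}^n$ is $C^{1,\alpha}$-smooth ($C^1$ with locally $\alpha$-Hölder derivative, $\alpha\in(0,1]$), strongly monotone with respect to the $k$-cone $C$, and $D_x\Phi_t(C\setminus\{0\})\subset\operatorname{Int}C$ for $t>0$. A $k$-exponential separation along a compact invariant set $K$ associated with $C$ consists of continuous (in the Grassmannian gap metric) families of $k$-dimensional subspaces $E_x$ and $(n-k)$-dimensional subspaces $F_x$, $x\in K$, such that: $\mathbb{R}^n=E_x\oplus F_x$; $D_x\Phi_tE_x=E_{\Phi_t(x)}$, $D_x\Phi_tF_x\subset F_{\Phi_t(x)}$ for $t>0$; there are $M>0$, $0<\gamma<1$ with $\|D_x\Phi_tw\|\le M\gamma^t\|D_x\Phi_tv\|$ for all $x\in K$, unit $w\in F_x$, unit $v\in E_x$, $t\ge0$; and $E_x\subset\operatorname{Int}C\cup\{0\}$,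 $F_x\cap C=\{0\}$. *)

(* Defs.v *)
(* MathComp-Analysis over an abstract R : realType.
   Vectors of R^n are row vectors 'rV[R]_n; linear subspaces are row spaces
   of square matrices 'M[R]_n (mxalgebra, scope %MS). *)
From HB Require Import structures.
From mathcomp Require Import all_boot all_order all_algebra.
From mathcomp Require Import all_classical all_reals all_analysis.
Set Implicit Arguments. Unset Strict Implicit. Unset Printing Implicit Defensive.
Import Order.TTheory GRing.Theory Num.Theory.
Import numFieldNormedType.Exports.
Local Open Scope classical_set_scope.
Local Open Scope ring_scope.

Section Defs.
Context {R : realType} {n : nat}.
Local Notation V := 'rV[R]_n.

Definition insp (v : V) (W : 'M[R]_n) : Prop := (v <= W)%MS.

Definition is_flow (Phi : R -> V -> V) : Prop :=
  (forall x, Phi 0 x = x) /\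
  (forall s t x, Phi (s + t) x = Phi s (Phi t x)) /\
  continuous (fun p : R * V => Phi p.1 p.2).

Definition C1alpha_flow (alpha : R) (Phi : R -> V -> V) : Prop :=
  (forall p : R * V, differentiable (fun q : R * V => Phi q.1 q.2) p) /\
  (forall w : R * V, continuous (fun p : R * V => 'd (fun q : R * V => Phi q.1 q.2) p w)) /\
  (forall t (x : V), differentiable (Phi t) x) /\
  (forall t (x0 : V), exists r : R, exists L : R, 0 < r /\ 0 <= L /\
     forall x y w : V, `|x - x0| < r -> `|y - x0| < r ->
       `|'d (Phi t) x w - 'd (Phi t) y w| <= L * (`|x - y| `^ alpha) * `|w|).

Definition subspace_in (W : 'M[R]_n) (C : set V) : Prop :=
  forall v, insp v W -> C v.

Definition k_cone (k : nat) (C : set V) : Prop :=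
  closed C /\
  (forall v (l : R), C v -> C (l *: v)) /\
  (exists W : 'M[R]_n, \rank W = k /\ subspace_in W C) /\
  (forall W : 'M[R]_n, subspace_in W C -> (\rank W <= k)%N).

Definition k_solid (k : nat) (C : set V) : Prop :=
  exists W : 'M[R]_n, \rank W = k /\
    forall v, insp v W -> v != 0 -> (interior C) v.

Definition cone_rel (C : set V) (x y : V) : Prop := C (x - y).
Definition cone_rel_int (C : set V) (x y : V) : Prop := (interior C) (x - y).

Definition strongly_monotone (Phi : R -> V -> V) (C : set V) : Prop :=
  (forall x y t, cone_rel C x y -> 0 <= t -> cone_rel C (Phi t x) (Phi t y)) /\
  (forall x y t, x != y -> cone_rel C x y -> 0 < t ->
     cone_rel_int C (Phi t x) (Phi t y)).

(* Assumption (FWW).  Strong monotonicity is defined w.r.t. a k-solid cone,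
   so k-solidity of C is part of the assumption. *)
Definition FWW (alpha : R) (Phi : R -> V -> V) (k : nat) (C : set V) : Prop :=
  0 < alpha /\ alpha <= 1 /\
  is_flow Phi /\ C1alpha_flow alpha Phi /\
  k_cone k C /\ k_solid k C /\
  strongly_monotone Phi C /\
  (forall t (x v : V), 0 < t -> C v -> v != 0 -> (interior C) ('d (Phi t) x v)).

Definition flow_invariant (Phi : R -> V -> V) (K : set V) : Prop :=
  forall t, Phi t @` K = K.

Definition dist_sp (v : V) (W : 'M[R]_n) : R :=
  inf [set `|v - w| | w in [set w | insp w W]].

Definition half_gap (U W : 'M[R]_n) : R :=
  sup [set dist_sp u W | u in [set u | insp u U /\ `|u| = 1]].

Definition gap (U W : 'M[R]_n) : R := Num.max (half_gap U W) (half_gap W U).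

Definition gap_continuous_on (K : set V) (E : V -> 'M[R]_n) : Prop :=
  forall x, K x -> forall eps : R, 0 < eps -> exists d : R, 0 < d /\
    forall y, K y -> `|x - y| < d -> gap (E x) (E y) < eps.

Definition exp_separation (Phi : R -> V -> V) (C : set V) (k : nat)
    (K : set V) (E F : V -> 'M[R]_n) : Prop :=
  gap_continuous_on K E /\ gap_continuous_on K F /\
  (forall x, K x -> \rank (E x) = k /\ \rank (F x) = (n - k)%N) /\
  (forall x, K x ->
     (forall v, exists e f, insp e (E x) /\ insp f (F x) /\ v = e + f) /\
     (forall v, insp v (E x) -> insp v (F x) -> v = 0)) /\
  (forall x t, K x -> 0 < t ->
     (forall v, insp v (E x) -> insp ('d (Phi t) x v) (E (Phi t x))) /\
     (forall w, insp w (E (Phi t x)) -> exists v, insp v (E x) /\ w = 'd (Phi t) x v) /\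
     (forall v, insp v (F x) -> insp ('d (Phi t) x v) (F (Phi t x)))) /\
  (exists M gamma : R, 0 < M /\ 0 < gamma /\ gamma < 1 /\
     forall x w v t, K x -> insp w (F x) -> `|w| = 1 -> insp v (E x) -> `|v| = 1 ->
       0 <= t -> `|'d (Phi t) x w| <= M * (gamma `^ t) * `|'d (Phi t) x v|) /\
  (forall x v, K x -> insp v (E x) -> v != 0 -> (interior C) v) /\
  (forall x v, K x -> insp v (F x) -> C v -> v = 0).

Definition projP (E F : V -> 'M[R]_n) (y v : V) : V := v *m proj_mx (E y) (F y).
Definition projQ (E F : V -> 'M[R]_n) (y v : V) : V := v - projP E F y v.

End Defs.

(* Main.v *)
Require Import Defs.
From HB Require Import structures.
From mathcomp Require Import all_boot all_order all_algebra.
From mathcomp Require Import all_classical all_reals all_analysis.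
From mathcomp Require Import ring lra.
Import Order.TTheory GRing.Theory Num.Theory.
Import numFieldNormedType.Exports.
Local Open Scope classical_set_scope.
Local Open Scope ring_scope.

Section S.
Context {R : realType} {n : nat}.
Local Notation V := 'rV[R]_n.

Lemma entry_le (v : V) i : `|v 0 i| <= `|v|.
Proof.
rewrite [leRHS]/Num.norm /= mx_normrE; apply/bigmax_geP; right; by exists (0, i).
Qed.

Lemma norm_le_entries (v : V) c : 0 <= c -> (forall i, `|v 0 i| <= c) -> `|v| <= c.
Proof.
move=> c0 H; rewrite [leLHS]/Num.norm /= mx_normrE; apply/bigmax_leP; split => // -[i j] _ /=.
by rewrite (ord1 i); apply: H.
Qed.

Lemma mulmx_bound (A : 'M[R]_n) : exists M, 0 < M /\ forall v : V, `|v *m A| <= M * `|v|.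
Proof.
exists (1 + \sum_i \sum_j `|A i j|); split.
  by rewrite ltr_pwDl // sumr_ge0 // => i _; rewrite sumr_ge0.
move=> v; apply: norm_le_entries => [|j]; first by rewrite mulr_ge0 // addr_ge0 // sumr_ge0 // => i _; rewrite sumr_ge0.
rewrite mxE; apply: le_trans (ler_norm_sum _ _ _) _.
apply: (@le_trans _ _ (\sum_i `|v| * `|A i j|)).
  by apply: ler_sum => i _; rewrite normrM ler_wpM2r // entry_le.
rewrite -mulr_sumr mulrC ler_wpM2r //.
apply: le_trans (ler_wpDl (ler01) (lexx _)).
apply: ler_sum => i _.
rewrite (bigD1 j) //= ler_wpDr // sumr_ge0 // => l _; rewrite sumr_ge0.
Qed.

Lemma insp0 (W : 'M[R]_n) : insp (0 : V) W.
Proof. exact: sub0mx. Qed.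
Lemma inspZ (W : 'M[R]_n) a (v : V) : insp v W -> insp (a *: v) W.
Proof. exact: scalemx_sub. Qed.
Lemma inspD (W : 'M[R]_n) (u v : V) : insp u W -> insp v W -> insp (u + v) W.
Proof. exact: addmx_sub. Qed.
Lemma inspN (W : 'M[R]_n) (v : V) : insp v W -> insp (- v) W.
Proof. by move=> h; rewrite -scaleN1r; apply: inspZ. Qed.

Lemma half_gap_approx (U W : 'M[R]_n) eps (u : V) :
  half_gap U W < eps -> insp u U -> exists w, insp w W /\ `|u - w| <= eps * `|u|.
Proof.
move=> hg uU.
have [->|u0] := eqVneq u 0.
  by exists 0; split; [exact: insp0 | rewrite subr0 !normr0 mulr0].
have a0 : 0 < `|u| by rewrite normr_gt0.
set u1 := `|u|^-1 *: u.
have u1U : insp u1 U by apply: inspZ.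
have nu1 : `|u1| = 1 by rewrite /u1 normrZ ger0_norm ?invr_ge0 ?ltW // mulVf // gt_eqF.
set S := [set `|u1 - w| | w in [set w | insp w W]].
have Sne : nonempty S.
  exists `|u1 - 0|; rewrite /S /=; exists 0; [exact: (insp0 W) | by []].
have Slb : has_lbound S by exists 0 => _ [w _ <-].
have dle : forall u' : V, dist_sp u' W <= `|u'|.
  move=> u'; rewrite /dist_sp; have -> : `|u'| = `|u' - 0| by rewrite subr0.
  apply: ge_inf; first by exists 0 => _ [w _ <-].
  by exists 0; [exact: (insp0 W) | by []].
have dS : dist_sp u1 W <= half_gap U W.
  rewrite /half_gap; apply: ub_le_sup; last by exists u1.
  by exists 1 => _ [u' [_ nu'] <-]; rewrite -nu'; apply: dle.
have lt : dist_sp u1 W < eps by apply: le_lt_trans hg.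
have epsd : 0 < eps - dist_sp u1 W by rewrite subr_gt0.
have [_ [w wW <-] hw] := inf_adherent epsd (conj Sne Slb).
move: hw; rewrite (_ : inf S = dist_sp u1 W) // addrCA subrr addr0 => hw.
exists (`|u| *: w); split; first exact: inspZ.
have -> : u - `|u| *: w = `|u| *: (u1 - w).
  by rewrite scalerBr /u1 scalerA divff ?gt_eqF // scale1r.
rewrite normrZ ger0_norm; last exact: ltW.
rewrite [leLHS]mulrC; apply: ler_wpM2r; [exact: ltW | exact: ltW].
Qed.

Lemma gap_approx (U W : 'M[R]_n) eps (u : V) :
  gap U W < eps -> insp u W -> exists w, insp w U /\ `|u - w| <= eps * `|u|.
Proof.
by rewrite /gap gt_max => /andP[_ h]; apply: half_gap_approx.
Qed.

Lemma cap0 (U W : 'M[R]_n) : (forall v : V, insp v U -> insp v W -> v = 0) -> (U :&: W = 0)%MS.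
Proof. by move=> H; apply/eqP/rowV0P => v; rewrite sub_capmx => /andP[]; apply: H. Qed.

Lemma proj_decomp (U W : 'M[R]_n) (e f : V) : (U :&: W = 0)%MS -> insp e U -> insp f W ->
  (e + f) *m proj_mx U W = e.
Proof. by move=> h eU fW; rewrite mulmxDl proj_mx_id // proj_mx_0 // addr0. Qed.

Lemma mulmx_continuous (A : 'M[R]_n) : continuous (fun v : V => v *m A).
Proof.
have [M [M0 HM]] := mulmx_bound A.
apply: (@bounded_linear_continuous _ _ _ (mulmxr A)).
apply/linear_boundedP; apply: filterS (nbhs_pinfty_ge (r := M) _) => [r Mr v|].
  by apply: le_trans (HM v) _; rewrite ler_wpM2r.
by rewrite gtr0_real.
Qed.

Lemma closed_sp (W : 'M[R]_n) : closed [set v : V | insp v W].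
Proof.
have -> : [set v : V | insp v W] = (fun v : V => `|v *m cokermx W|) @^-1` [set x | x <= 0].
  apply/seteqP; split => v /=; rewrite /insp submxE.
    by move/eqP ->; rewrite normr0.
  by rewrite normr_le0.
apply: preimage_closed; last exact: closed_le.
move=> v _; apply: continuous_comp; first exact: mulmx_continuous.
exact: norm_continuous.
Qed.

Lemma compact_annulus (W : 'M[R]_n) (a b : R) :
  compact [set v : V | insp v W /\ a <= `|v| /\ `|v| <= b].
Proof.
apply: bounded_closed_compact.
  apply: filterS (nbhs_pinfty_ge (r := b) _) => [M bM v [_ [_ h]]|]; last exact: num_real.
  exact: le_trans h bM.
have -> : [set v : V | insp v W /\ a <= `|v| /\ `|v| <= b] =
  [set v | insp v W] `&` ((fun v : V => `|v|) @^-1` [set x | a <= x] `&` (fun v : V => `|v|) @^-1` [set x | x <= b]).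
  by apply/seteqP; split => v /=.
apply: closedI; first exact: closed_sp.
apply: closedI; (apply: preimage_closed; [move=> ? _; exact: norm_continuous| ]).
  exact: closed_ge.
exact: closed_le.
Qed.


Arguments gap_approx {U W eps u}.
Arguments half_gap_approx {U W eps u}.
Arguments proj_decomp {U W e f}.
Lemma ball_norm_lt (x y : V) d : ball x d y -> `|x - y| < d.
Proof. by rewrite -ball_normE. Qed.

Arguments ball_norm_lt {x y d}.
Lemma part_i (K : set V) (E F : V -> 'M[R]_n) : compact K ->
  gap_continuous_on K E -> gap_continuous_on K F ->
  (forall y, K y -> (E y :&: F y = 0)%MS) ->
  (forall y, K y -> forall v, exists e f, insp e (E y) /\ insp f (F y) /\ v = e + f) ->
  exists M, 0 < M /\ forall y v, K y -> `|projP E F y v| <= M * `|v|.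
Proof.
move=> cK gE gF cap dec.
have loc : forall x, K x -> \forall x' \near x & M \near pinfty_nbhs R,
    (K x' -> forall v, `|projP E F x' v| <= M * `|v|).
  move=> x Kx.
  have [Mx [Mx0 HMx]] := mulmx_bound (proj_mx (E x) (F x)).
  pose eps := (8 * (Mx + 1))^-1.
  have eps0 : 0 < eps by rewrite invr_gt0 mulr_gt0 // addr_gt0.
  have hE : eps * (8 * (Mx + 1)) = 1 by rewrite /eps mulVf // gt_eqF // mulr_gt0 // addr_gt0.
  have epsMx : Mx * eps <= 1/8 by nra.
  have eps8 : eps <= 1/8 by nra.
  have [d1 [d10 h1]] := gE x Kx eps eps0.
  have [d2 [d20 h2]] := gF x Kx eps eps0.
  exists (ball x (Num.min d1 d2), [set M | 3 * (Mx + 1) < M]).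
    split; first by apply: nbhsx_ballx; rewrite lt_min d10 d20.
    by apply: nbhs_pinfty_gt; apply: num_real.
  case=> y M /= [yb HM] Ky v.
  have [e [f [eE [fF ->]]]] := dec y Ky v.
  rewrite /projP proj_decomp ?cap //.
  have := ball_norm_lt yb; rewrite lt_min => /andP[yd1 yd2].
  have [e' [e'E he]] := gap_approx (h1 y Ky yd1) eE.
  have [f' [f'F hf]] := gap_approx (h2 y Ky yd2) fF.
  have key : `|e'| <= Mx * `|e' + f'|.
    by rewrite -{1}(proj_decomp (cap x Kx) e'E f'F); apply: HMx.
  have t1 : `|e| <= `|e - e'| + `|e'|.
    by rewrite -{1}(subrK e' e); apply: ler_normD.
  have t2 : `|e' + f'| <= `|e + f| + `|e - e'| + `|f - f'|.
    have -> : e' + f' = (e + f) + ((e' - e) + (f' - f)).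
      by rewrite [e' - e + _]addrACA -opprD [RHS]addrC subrK.
    rewrite -[leRHS]addrA (distrC e) (distrC f).
    by apply: le_trans (ler_normD _ _) _; rewrite lerD2l; apply: ler_normD.
  have t3 : `|f| <= `|e + f| + `|e|.
    by rewrite -{1}(addKr e f) addrC; apply: ler_normB.
  have n1 := normr_ge0 e; have n2 := normr_ge0 f; have n3 := normr_ge0 (e + f).
  have n4 := normr_ge0 (e' + f').
  have k2 : Mx * `|e' + f'| <= Mx * (`|e + f| + eps * `|e| + eps * `|f|).
    apply: ler_wpM2l; first exact: ltW.
    apply: le_trans t2 _; apply: lerD; first apply: lerD => //.
    exact: hf.
  nra.
have H := (compact_near_coveringP K).1 cK R _ _ _ loc.
have [M M0 HM] := pinfty_ex_gt0 (H _); exists M; split => // y v Ky; exact: HM.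
Qed.


Lemma part_iii (K : set V) (E F : V -> 'M[R]_n) (v : V) : compact K ->
  gap_continuous_on K F ->
  (forall y, K y -> (E y :&: F y = 0)%MS) ->
  (forall y, K y -> forall v, exists e f, insp e (E y) /\ insp f (F y) /\ v = e + f) ->
  (forall x, K x -> ~ insp v (F x)) ->
  exists c, 0 < c /\ forall y, K y -> c <= `|projP E F y v|.
Proof.
move=> cK gF cap dec nF.
have loc : forall x, K x -> \forall x' \near x & M \near pinfty_nbhs R,
    (K x' -> 1 <= M * `|projP E F x' v|).
  move=> x Kx.
  have [Mx [Mx0 HMx]] := mulmx_bound (proj_mx (E x) (F x)).
  have [e0 [f0 [e0E [f0F ve0]]]] := dec x Kx v.
  have e00 : 0 < `|e0|.
    rewrite normr_gt0; apply/negP => /eqP e00; apply: (nF x Kx).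
    by rewrite ve0 e00 add0r.
  have nv := normr_ge0 v.
  pose eps := `|e0| / (2 * Mx * (`|v| + 1)).
  have den0 : 0 < 2 * Mx * (`|v| + 1) by rewrite !mulr_gt0 // ltr_wpDl.
  have eps0 : 0 < eps by rewrite divr_gt0.
  have hE : eps * (2 * Mx * (`|v| + 1)) = `|e0| by rewrite /eps divfK // gt_eqF.
  have a2 : Mx * eps * `|v| <= `|e0| / 2.
    rewrite ler_pdivlMr // -hE.
    have -> : eps * (2 * Mx * (`|v| + 1)) = Mx * eps * `|v| * 2 + 2 * Mx * eps by ring.
    by rewrite lerDl; apply: mulr_ge0; [apply: mulr_ge0 => //; apply: ltW | apply: ltW].
  clearbody eps.
  pose c := `|e0| / (2 * Mx * (1 + eps)).
  have c0 : 0 < c by rewrite divr_gt0 // !mulr_gt0 // addr_gt0.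
  have [d2 [d20 h2]] := gF x Kx eps eps0.
  exists (ball x d2, [set M | c^-1 < M]).
    split; first exact: nbhsx_ballx.
    by apply: nbhs_pinfty_gt; apply: num_real.
  case=> y M /= [yb HM] Ky.
  have [e [f [eE [fF vef]]]] := dec y Ky v.
  have -> : projP E F y v = e by rewrite /projP vef proj_decomp ?cap.
  have yd := ball_norm_lt yb.
  have [f' [f'F hf]] := gap_approx (h2 y Ky yd) fF.
  have key : `|e0| <= Mx * `|v - f'|.
    have -> : e0 = (v - f') *m proj_mx (E x) (F x).
      rewrite ve0 -addrA proj_decomp ?cap //.
      by apply: inspD => //; apply: inspN.
    exact: HMx.
  have t1 : `|v - f'| <= `|e| + `|f - f'|.
    by rewrite vef -addrA; apply: ler_normD.
  have t3 : `|f| <= `|v| + `|e|.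
    by rewrite vef -{1}(addKr e f) addrC; apply: ler_normB.
  have n1 := normr_ge0 e; have n2 := normr_ge0 f.
  have a1 : `|e0| <= Mx * (`|e| + eps * (`|v| + `|e|)).
    apply: le_trans key _; apply: ler_wpM2l; first exact: ltW.
    apply: le_trans t1 _; rewrite lerD2l; apply: le_trans hf _.
    by apply: ler_wpM2l; [exact: ltW | exact: t3].
  have a1' : `|e0| <= Mx * (1 + eps) * `|e| + Mx * eps * `|v|.
    apply: le_trans a1 _; rewrite le_eqVlt; apply/orP; left; apply/eqP; ring.
  have a3 : `|e0| <= 2 * Mx * (1 + eps) * `|e|.
    have -> : 2 * Mx * (1 + eps) * `|e| = 2 * (Mx * (1 + eps) * `|e|) by ring.
    move: a1' a2; generalize (Mx * (1 + eps) * `|e|) (Mx * eps * `|v|) `|e0| => X Y Z.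
    lra.
  have d0 : 0 < 2 * Mx * (1 + eps) by rewrite !mulr_gt0 // addr_gt0.
  have hc : c <= `|e| by rewrite /c ler_pdivrMr // mulrC.
  have Mc : 1 <= M * c.
    rewrite -[1](mulVf (lt0r_neq0 c0)); apply: ler_wpM2r; [exact: ltW | exact: ltW].
  have M0 : 0 <= M by apply: le_trans (ltW HM); rewrite invr_ge0 ltW.
  apply: le_trans Mc _; exact: ler_wpM2l.
have H := (compact_near_coveringP K).1 cK R _ _ _ loc.
have [M M0 HM] := pinfty_ex_gt0 (H _).
exists M^-1; split; first by rewrite invr_gt0.
move=> y Ky; have := HM y Ky Ky.
by rewrite -ler_pdivrMl // mulr1.
Qed.

Lemma ball_of_norm (x y : V) d : `|x - y| < d -> ball x d y.
Proof. by rewrite -ball_normE. Qed.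

Lemma unif_annulus (A : set V) (C : set V) : compact A ->
  (forall e, A e -> (interior C) e) ->
  exists2 M1, 1 <= M1 & forall e w, A e -> M1 * `|w - e| < 1 -> C w.
Proof.
move=> cA iC.
have loc : forall e0, A e0 -> \forall e \near e0 & M \near pinfty_nbhs R,
    (forall w, M * `|w - e| < 1 -> C w).
  move=> e0 Ae0.
  have := iC e0 Ae0; rewrite /interior /= => /nbhs_ballP [r /= r0 rC].
  have r20 : 0 < r / 2 by rewrite divr_gt0.
  exists (ball e0 (r / 2), [set M | (r / 2)^-1 < M]).
    split; first exact: nbhsx_ballx.
    by apply: nbhs_pinfty_gt; apply: num_real.
  case=> e M /= [eb HM] w hw; apply: rC.
  have M0 : 0 < M by apply: lt_trans HM; rewrite invr_gt0.
  have h1 := ball_norm_lt eb.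
  have h2 : `|w - e| < r / 2.
    have : `|w - e| < M^-1 by rewrite -(ltr_pM2l M0) mulfV ?gt_eqF.
    move/lt_trans; apply; rewrite -(invrK (r / 2)) ltf_pV2 ?posrE ?invr_gt0 //.
  apply: ball_of_norm.
  have -> : e0 - w = (e0 - e) + (e - w) by rewrite addrA subrK.
  apply: le_lt_trans (ler_normD _ _) _.
  rewrite (distrC e) [ltRHS](splitr r); exact: ltrD.
have H := (compact_near_coveringP A).1 cA R _ _ _ loc.
have [M M1 HM] := pinfty_ex_ge (num_real 1) (H _).
by exists M => // e w Ae; apply: HM.
Qed.


Lemma part_ii (K : set V) (E : V -> 'M[R]_n) (C : set V) : compact K ->
  gap_continuous_on K E ->
  (forall x v, K x -> insp v (E x) -> v != 0 -> (interior C) v) ->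
  exists2 M, 0 < M & forall y e w, K y -> insp e (E y) -> `|e| = 1 ->
     M * `|w - e| < 1 -> C w.
Proof.
move=> cK gE EC.
have loc : forall x, K x -> \forall x' \near x & M \near pinfty_nbhs R,
    (K x' -> forall e w, insp e (E x') -> `|e| = 1 -> M * `|w - e| < 1 -> C w).
  move=> x Kx.
  have iC : forall e, [set v : V | insp v (E x) /\ 1/2 <= `|v| /\ `|v| <= 2] e -> (interior C) e.
    move=> e [eE [e2 _]]; apply: (EC x) => //.
    have : 0 < `|e| by apply: lt_le_trans e2; rewrite divr_gt0.
    by rewrite normr_gt0.
  have [M1 M11 HM1] := unif_annulus _ C (compact_annulus (E x) (1/2) 2) iC.
  have M10 : 0 < M1 by apply: lt_le_trans M11.
  pose eps := (4 * M1)^-1.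
  have eps0 : 0 < eps by rewrite invr_gt0 mulr_gt0.
  have hE : M1 * eps = 1/4.
    by rewrite /eps invfM mulrCA mulfV ?gt_eqF // mulr1 mul1r.
  have eps4 : eps <= 1/4.
    by rewrite -hE ler_peMl //; apply: ltW.
  clearbody eps.
  have [d [d0 h1]] := gE x Kx eps eps0.
  exists (ball x d, [set M | 2 * M1 < M]).
    split; first exact: nbhsx_ballx.
    by apply: nbhs_pinfty_gt; apply: num_real.
  case=> y M /= [yb HM] Ky e w eE ne hw.
  have yd := ball_norm_lt yb.
  have [e' [e'E he]] := gap_approx (h1 y Ky yd) eE.
  rewrite ne mulr1 in he.
  have t1 : `|e| <= `|e - e'| + `|e'|.
    by rewrite -{1}(subrK e' e); apply: ler_normD.
  have t2 : `|e'| <= `|e - e'| + `|e|.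
    by rewrite -{1}(subrK e e') (distrC e); apply: ler_normD.
  have t3 : `|w - e'| <= `|w - e| + `|e - e'|.
    by rewrite -{1}(subrK e w) -addrA; apply: ler_normD.
  have nwe := normr_ge0 (w - e).
  have t4 : 2 * M1 * `|w - e| <= M * `|w - e| by apply: ler_wpM2r => //; apply: ltW.
  have t5 : M1 * `|w - e'| <= M1 * `|w - e| + M1 * `|e - e'|.
    by rewrite -mulrDr; apply: ler_wpM2l => //; apply: ltW.
  have t6 : M1 * `|e - e'| <= M1 * eps by apply: ler_wpM2l => //; apply: ltW.
  apply: (HM1 e').
    rewrite /=; split => //; rewrite ne in t1 t2; split.
      move: t1 he eps4; generalize `|e - e'| `|e'| eps => a b c; lra.
    move: t2 he eps4; generalize `|e - e'| `|e'| eps => a b c; lra.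
  apply: le_lt_trans t5 _.
  apply: le_lt_trans (lerD (lexx _) t6) _; rewrite hE.
  have h : 2 * (M1 * `|w - e|) < 1 by rewrite mulrA; apply: le_lt_trans t4 hw.
  lra.
have H := (compact_near_coveringP K).1 cK R _ _ _ loc.
have [M M0 HM] := pinfty_ex_gt0 (H _).
by exists M => // y e w Ky; apply: HM.
Qed.

End S.

Theorem lemma3p5 (R : realType) (n k : nat) (alpha : R)
  (Phi : R -> 'rV[R]_n -> 'rV[R]_n) (C : set 'rV[R]_n)
  (K : set 'rV[R]_n) (E F : 'rV[R]_n -> 'M[R]_n) :
  FWW alpha Phi k C ->
  compact K -> flow_invariant Phi K ->
  exp_separation Phi C k K E F ->
  (* (i) *)
  (exists M : R, 0 < M /\ forall y v, K y ->
     `|projP E F y v| <= M * `|v| /\ `|projQ E F y v| <= M * `|v|) /\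
  (* (ii) *)
  (exists C1 : R, 0 < C1 /\ forall (v y : 'rV[R]_n), v != 0 -> K y ->
     C1 * `|projQ E F y v| <= `|projP E F y v| -> (interior C) v) /\
  (* (iii) *)
  (forall v, C v -> v != 0 -> exists delta3 : R, 0 < delta3 /\
     forall y, K y -> `|projQ E F y v| <= delta3 * `|projP E F y v|).
Proof.
move=> [_ [_ [_ [_ [[_ [Cscale _]] _]]]]] cK _ [gE [gF [_ [Hdec [_ [_ [EC FC]]]]]]].
have cap : forall y, K y -> (E y :&: F y = 0)%MS.
  by move=> y Ky; apply: cap0; apply: (Hdec y Ky).2.
have dec : forall y, K y -> forall v, exists e f, insp e (E y) /\ insp f (F y) /\ v = e + f.
  by move=> y Ky; apply: (Hdec y Ky).1.
have PQ : forall y v, K y -> exists e f, insp e (E y) /\ insp f (F y) /\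
    projP E F y v = e /\ projQ E F y v = f /\ v = e + f.
  move=> y v Ky; have [e [f [eE [fF ve]]]] := dec y Ky v.
  exists e, f; do !split => //.
    by rewrite /projP ve proj_decomp ?cap.
  by rewrite /projQ /projP ve proj_decomp ?cap // addrC addKr.
have [M [M0 HM]] := part_i _ _ _ cK gE gF cap dec.
have HQ : forall y v, K y -> `|projQ E F y v| <= (M + 1) * `|v|.
  move=> y v Ky; rewrite /projQ mulrDl mul1r [leRHS]addrC.
  by apply: le_trans (ler_normB _ _) _; rewrite lerD2l; apply: (HM y v Ky).
split.
  exists (M + 1); split; first by rewrite addr_gt0.
  move=> y v Ky; split; last exact: HQ.
  apply: le_trans (HM y v Ky) _; apply: ler_wpM2r => //; by rewrite lerDl.
split.
  have [M2 M20 HM2] := part_ii _ _ _ cK gE EC.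
  exists (2 * M2); split; first by rewrite mulr_gt0.
  move=> v y v0 Ky.
  have [e [f [eE [fF [-> [-> ve]]]]]] := PQ y v Ky => hv.
  have nf := normr_ge0 f.
  have a0 : 0 < `|e|.
    rewrite lt_neqAle normr_ge0 andbT eq_sym; apply/negP => /eqP e0.
    have : `|f| <= 0.
      by rewrite -(@ler_pM2l _ (2 * M2)) ?mulr_gt0 // mulr0 -e0.
    rewrite normr_le0 => /eqP f0; move: v0; rewrite ve f0 addr0.
    by move/eqP: e0; rewrite normr_eq0 => /eqP ->; rewrite eqxx.
  rewrite /interior /=; apply/nbhs_ballP.
  have r0 : 0 < `|e| / (4 * M2) by rewrite divr_gt0 // mulr_gt0.
  exists (`|e| / (4 * M2)) => // w /ball_norm_lt hw.
  have Cw : C (`|e|^-1 *: w).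
    apply: (HM2 y (`|e|^-1 *: e)) => //; first exact: inspZ.
      by rewrite normrZ ger0_norm ?invr_ge0 ?normr_ge0 // mulVf // gt_eqF.
    rewrite -scalerBr normrZ ger0_norm ?invr_ge0 ?normr_ge0 // mulrCA mulrC.
    rewrite ltr_pdivrMr // mul1r.
    have t1 : `|w - e| <= `|v - w| + `|f|.
      have -> : w - e = (w - v) + (v - e) by rewrite addrA subrK.
      have -> : v - e = f by rewrite ve addrC addKr.
      by rewrite distrC; apply: ler_normD.
    have t2 : M2 * `|w - e| <= M2 * `|v - w| + M2 * `|f|.
      by rewrite -mulrDr; apply: ler_wpM2l => //; apply: ltW.
    have t3 : M2 * `|v - w| < `|e| / 4.
      rewrite -(ltr_pM2l M20) in hw.
      have M2n : M2 != 0 by rewrite gt_eqF.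
      have -> : `|e| / 4 = M2 * (`|e| / (4 * M2)) by field.
      exact: hw.
    have t4 : 2 * (M2 * `|f|) <= `|e| by rewrite mulrA.
    lra.
  by rewrite -[w](scale1r) -(mulfV (lt0r_neq0 a0)) -scalerA; apply: Cscale.
move=> v Cv v0.
have nF : forall x, K x -> ~ insp v (F x).
  by move=> x Kx vF; move/eqP: v0; apply; apply: (FC x v Kx vF Cv).
have [c [c0 hc]] := part_iii _ _ _ _ cK gF cap dec nF.
have nv0 : 0 < `|v| by rewrite normr_gt0.
exists ((M + 1) * `|v| / c); split; first by rewrite !mulr_gt0 ?invr_gt0 // addr_gt0.
move=> y Ky; apply: le_trans (HQ y v Ky) _.
have cn : c != 0 by rewrite gt_eqF.
have -> : (M + 1) * `|v| / c * `|projP E F y v| = (M + 1) * `|v| * (`|projP E F y v| / c) by field.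
rewrite -[leLHS]mulr1; apply: ler_wpM2l.
  by apply: mulr_ge0; [apply: ltW; rewrite addr_gt0 | apply: ltW].
by rewrite ler_pdivlMr // mul1r; apply: hc.
Qed.
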